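(* Let $N=2^n$, fix a part $S_\beta$ (write $\beta=(S_\beta)$), and let $t$ be a random permutation of $\{0,\dots,N-1\}$ whose distribution is $\delta'$ non-$\beta$-uniform. Fix $\delta>0$ and $\gamma=2^{-m}$. Let $h$ be an arbitrary function on permutations and $r$ a value with $\Pr[h(t)=r]\ge\gamma$, and let $s$ denote $t$ conditioned on $h(t)=r$. Then there exist finitely many distributions $\mathbb{F}_i$, each $(p,\delta+\delta')$ non-$\beta$-uniform with $p=2m/\delta$, an arbitrary distribution $\mathbb{F}'$ on permutations and nonnegative weights $\alpha_i,\gamma'$ with $\sum_i\alpha_i+\gamma'=1$, $\gamma'\le\gamma$, such that the distribution of $s$ equals $\sum_i\alpha_i\mathbb{F}_i+\gamma'\mathbb{F}'$.
   Context: A part is a set $S=\{(x_i,y_i)\}_{i=1}^M$ such that some permutation $\pi$ of $\{0,\dots,N-1\}$ has $\pi(x_i)=y_i$ for all $i$; ''$S\subseteq\mathrm{parts}(t)$'' means $t(x_i)=y_i$ for all $i$. Parts $S,S'$ are distinct if they share no input and $S\cup S'$ is a part. Let $u$ be a uniformly random permutation. The $\beta$-uniform distribution (for $\beta=(S_\beta)$) is the law of $b:=u$ conditioned on $S_\beta\subseteq\mathrm{parts}(u)$. A random permutation $t$ is $\delta$ non-$\beta$-uniform if $\Pr[S\subseteq\mathrm{parts}(t)]\le2^{\delta|S|}\Pr[S\subseteq\mathrm{parts}(b)]$ for every part $S$. It is $(p,\delta)$ non-$\beta$-uniform if there is a part $S_0$ with $|S_0|\le p$ and $\Pr[S_0\subseteq\mathrm{parts}(t)]=1$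 such that for every part $S$ distinct from $S_0$, $\Pr[S\subseteq\mathrm{parts}(t)]\le2^{\delta|S|}\Pr[S\subseteq\mathrm{parts}(b)\mid S_0\subseteq\mathrm{parts}(b)]$. *)

(* Defs.v *)
From HB Require Import structures.
From mathcomp Require Import all_boot all_order all_algebra all_fingroup.
From mathcomp Require Import reals exp.
Set Implicit Arguments. Unset Strict Implicit. Unset Printing Implicit Defensive.
Import Order.TTheory GRing.Theory Num.Theory.
Local Open Scope ring_scope.

Section Defs.
Variable R : realType.
Variable N : nat.

Notation perm := {perm 'I_N}.

Definition is_dist (P : {ffun perm -> R}) : Prop :=
  (forall s, 0 <= P s) /\ \sum_s P s = 1.

Definition prob (P : {ffun perm -> R}) (E : pred perm) : R := \sum_(s | E s) P s.

(* law of t ~ P conditioned on the event E (0 if the event is null) *)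
Definition cond (P : {ffun perm -> R}) (E : pred perm) : {ffun perm -> R} :=
  [ffun s => if E s then P s / prob P E else 0].

Definition unif : {ffun perm -> R} := [ffun _ => (#|perm|%:R)^-1].

(* S \subseteq parts(s) : s(x) = y for all (x,y) in S *)
Definition in_parts (S : {set 'I_N * 'I_N}) : pred perm :=
  fun s => [forall xy in S, s xy.1 == xy.2].

Definition is_part (S : {set 'I_N * 'I_N}) : Prop := exists pi : perm, in_parts S pi.

Definition distinct_parts (S S' : {set 'I_N * 'I_N}) : Prop :=
  (forall xy xy', xy \in S -> xy' \in S' -> xy.1 <> xy'.1) /\ is_part (S :|: S').

Definition beta_unif (Sb : {set 'I_N * 'I_N}) := cond unif (in_parts Sb).

Definition non_beta_uniform (Sb : {set 'I_N * 'I_N}) (delta : R)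
    (P : {ffun perm -> R}) : Prop :=
  forall S, is_part S ->
    prob P (in_parts S) <= 2 `^ (delta * #|S|%:R) * prob (beta_unif Sb) (in_parts S).

Definition pd_non_beta_uniform (Sb : {set 'I_N * 'I_N}) (p delta : R)
    (P : {ffun perm -> R}) : Prop :=
  exists S0, [/\ is_part S0, #|S0|%:R <= p, prob P (in_parts S0) = 1 &
    forall S, is_part S -> distinct_parts S S0 ->
      prob P (in_parts S) <=
        2 `^ (delta * #|S|%:R) * prob (cond (beta_unif Sb) (in_parts S0)) (in_parts S)].
End Defs.

(* Main.v *)
Require Import Defs.
From HB Require Import structures.
From mathcomp Require Import all_boot all_order all_algebra all_fingroup.
From mathcomp Require Import reals exp.
From mathcomp Require Import ring lra.
Import Order.TTheory GRing.Theory Num.Theory.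
Local Open Scope ring_scope.
Set Implicit Arguments. Unset Strict Implicit. Unset Printing Implicit Defensive.

Section Aux.
Variable R : realType.
Variable N : nat.
Local Notation perm := {perm 'I_N}.

Lemma prob_ge0 (P : {ffun perm -> R}) E : (forall x, 0 <= P x) -> 0 <= prob P E.
Proof. by move=> h; apply: sumr_ge0. Qed.

Lemma prob_cond (P : {ffun perm -> R}) (A B : pred perm) :
  prob (cond P A) B = prob P (fun x => B x && A x) / prob P A.
Proof.
rewrite /prob /cond; under eq_bigr do rewrite ffunE.
by rewrite -big_mkcondr -mulr_suml.
Qed.

Lemma sum_gt0 (f : perm -> R) (P : pred perm) j :
  (forall x, 0 <= f x) -> P j -> 0 < f j -> 0 < \sum_(i | P i) f i.
Proof.
move=> h0 Pj fj; rewrite (bigD1 j) //=; apply: (lt_le_trans fj).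
by rewrite lerDl; apply: sumr_ge0.
Qed.

Lemma sum_gt0_ex (f : perm -> R) (P : pred perm) :
  0 < \sum_(i | P i) f i -> exists i, P i && (f i != 0).
Proof.
case: (pickP (fun i => P i && (f i != 0))) => [i Hi|H]; first by exists i.
rewrite big1 ?ltxx // => i Pi; move: (H i); rewrite Pi /=; by move/negbFE/eqP.
Qed.

Lemma in_partsU (S S' : {set 'I_N * 'I_N}) x :
  in_parts (S :|: S') x = in_parts S x && in_parts S' x.
Proof.
apply/idP/andP => [H|[H1 H2]].
  by split; apply/forall_inP => xy Hxy; apply: (forall_inP H); rewrite inE Hxy ?orbT.
apply/forall_inP => xy; rewrite inE => /orP[].
  exact: (forall_inP H1).
exact: (forall_inP H2).
Qed.

Lemma in_parts0 x : in_parts (set0 : {set 'I_N * 'I_N}) x.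
Proof. by apply/forall_inP => xy; rewrite inE. Qed.

Lemma card_perm_gt0 : (0 < #|perm|)%N.
Proof. by apply/card_gt0P; exists 1%g. Qed.

Lemma unif_gt0 x : 0 < (unif R N) x.
Proof. by rewrite ffunE invr_gt0 ltr0n card_perm_gt0. Qed.

Lemma unif_dist : is_dist (unif R N).
Proof.
split=> [x|]; first exact/ltW/unif_gt0.
under eq_bigr do rewrite ffunE.
rewrite sumr_const -[(_ ^-1) *+ _]mulr_natr cardT -cardE mulVf // pnatr_eq0 -lt0n; exact: card_perm_gt0.
Qed.

Variable Sb : {set 'I_N * 'I_N}.
Hypothesis hSb : is_part Sb.
Local Notation b := (beta_unif R Sb).

Lemma pu_gt0 : 0 < prob (unif R N) (in_parts Sb).
Proof.
case: hSb => pi hpi; apply: (sum_gt0 (j := pi)) => //; [move=> x; exact/ltW/unif_gt0 | exact: unif_gt0].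
Qed.

Lemma b_ge0 x : 0 <= b x.
Proof.
rewrite /beta_unif /cond ffunE; case: ifP => // _.
by rewrite divr_ge0 // ?ltW ?unif_gt0 ?pu_gt0.
Qed.

Lemma prob_b0 : prob b (in_parts set0) = 1.
Proof.
rewrite /beta_unif prob_cond.
have -> : prob (unif R N) (fun x => in_parts set0 x && in_parts Sb x) =
   prob (unif R N) (in_parts Sb) by apply: eq_bigl => x; rewrite in_parts0.
by rewrite mulfV // gt_eqF ?pu_gt0.
Qed.
End Aux.
Section Main.
Variable R : realType.
Variable N : nat.
Local Notation perm := {perm 'I_N}.
Variables (Sb : {set 'I_N * 'I_N}) (t : {ffun perm -> R}) (dl' dl m c : R).
Hypotheses (hSb : is_part Sb) (ht : non_beta_uniform Sb dl' t) (hdl : 0 < dl)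
  (hc : 2 `^ (- (2 * m)) <= c).
Local Notation b := (beta_unif R Sb).
Local Notation e := (dl + dl').

Definition ratio (mu : {ffun perm -> R}) (S : {set 'I_N * 'I_N}) :=
  prob mu (in_parts S) / (2 `^ (e * #|S|%:R) * prob b (in_parts S)).

Lemma two_powD x y : (2:R) `^ (x + y) = 2 `^ x * 2 `^ y.
Proof. by rewrite powRD // pnatr_eq0 implybT. Qed.

Lemma two_pow_le1 x : (2:R) `^ x <= 1 -> x <= 0.
Proof.
move=> h; have := ln_le0 h; rewrite ln_powR.
have l2 : 0 < ln (2:R) by apply: ln_gt0; rewrite ltr1n.
by rewrite pmulr_lle0.
Qed.

Lemma step (mu : {ffun perm -> R}) : (forall x, 0 <= mu x) -> (forall x, mu x <= t x) ->
  c < \sum_x mu x ->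
  exists S, [/\ is_dist (cond mu (in_parts S)),
     pd_non_beta_uniform Sb (2 * m / dl) e (cond mu (in_parts S)) &
     0 < prob mu (in_parts S)].
Proof.
move=> h0 hle hM.
have P0 : 0 < prob b (in_parts set0) by rewrite (prob_b0 R hSb).
have [S hS hmax] := @arg_maxP _ _ _ set0 (fun S => 0 < prob b (in_parts S)) (ratio mu) P0.
set a := prob mu (in_parts S); set pb := prob b (in_parts S).
set M := \sum_x mu x.
have c0 : 0 < c by apply: lt_le_trans hc; apply: powR_gt0.
have M0 : 0 < M by apply: lt_trans hM.
have r0 : ratio mu set0 = M.
  rewrite /ratio (prob_b0 R hSb) (_ : #|_| = 0%N) ?mulr0; last exact: cards0.
  rewrite  powRr0 !mulr1 divr1.
  by apply: eq_bigl => x; rewrite in_parts0.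
have hM' := hmax _ P0; rewrite r0 in hM'.
have D0 : 0 < 2 `^ (e * #|S|%:R) * pb by rewrite mulr_gt0 // powR_gt0.
have hMa : M * (2 `^ (e * #|S|%:R) * pb) <= a by rewrite -ler_pdivlMr.
have a0 : 0 < a by apply: lt_le_trans hMa; rewrite mulr_gt0.
have partS : is_part S.
  by have [x /andP[hx _]] := sum_gt0_ex hS; exists x.
have hta : a <= prob t (in_parts S) by apply: ler_sum => x _; apply: hle.
have htS := ht partS.
have hsz : #|S|%:R <= 2 * m / dl.
  rewrite ler_pdivlMr //.
  have h1 : M * 2 `^ (dl * #|S|%:R) <= 1.
    have pw : 0 < 2 `^ (dl' * #|S|%:R) :> R by apply: powR_gt0.
    rewrite -(@ler_pM2r _ (2 `^ (dl' * #|S|%:R) * pb)); last by rewrite mulr_gt0.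
    rewrite mul1r !mulrA -[M * _ * _]mulrA -two_powD -mulrDl.
    rewrite -mulrA; have HH := le_trans hMa hta. have HH2 := le_trans HH htS. exact HH2.
  have h2 : 2 `^ (dl * #|S|%:R - 2 * m) <= 1 :> R.
    rewrite two_powD; apply: (le_trans _ h1); rewrite mulrC; apply: ler_wpM2r.
      exact: powR_ge0.
    exact: (le_trans hc (ltW hM)).
  have := two_pow_le1 h2; rewrite subr_le0 mulrC //.
exists S; split.
- split=> [x|].
    by rewrite /cond ffunE; case: ifP => // _; rewrite divr_ge0 // ltW.
  have -> : \sum_s cond mu (in_parts S) s = prob (cond mu (in_parts S)) xpredT by [].
  by rewrite prob_cond mulfV ?gt_eqF.
- exists S; split => //.
    rewrite prob_cond (_ : prob mu _ = a) ?mulfV ?gt_eqF //.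
    by apply: eq_bigl => x; rewrite andbb.
  move=> S' pS' [hdis pU].
  set U := S' :|: S.
  have cU : #|U|%:R = #|S'|%:R + #|S|%:R :> R.
    rewrite /U cardsU; have -> : S' :&: S = set0.
      apply/setP => xy; rewrite !inE; apply/negbTE/negP => /andP[h1 h2].
      exact: (hdis xy xy).
    by rewrite cards0 subn0 natrD.
  have eqU : forall (P : {ffun perm -> R}),
      prob P (fun x => in_parts S' x && in_parts S x) = prob P (in_parts U).
    by move=> P; apply: eq_bigl => x; rewrite /U in_partsU.
  have E1 := prob_cond mu (in_parts S) (in_parts S').
  have E2 := prob_cond b (in_parts S) (in_parts S').
  rewrite E1 E2 !eqU -/a -/pb.
  have pbU0 : 0 <= prob b (in_parts U) by apply: prob_ge0; apply: (b_ge0 R hSb).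
  case: (ltP 0 (prob b (in_parts U))) => hpbU.
    have := hmax _ hpbU; rewrite /ratio -/a -/pb cU mulrDr two_powD => hr.
    rewrite ler_pdivrMr //.
    move: hr => /=; rewrite ler_pdivrMr ?mulr_gt0 ?powR_gt0 // => hr.
    apply: (le_trans hr) => {hr}; rewrite le_eqVlt; apply/orP; left; apply/eqP.
    have : pb != 0 by rewrite gt_eqF.
    have : 2 `^ (e * #|S|%:R) != 0 :> R by rewrite gt_eqF ?powR_gt0.
    move=> ? ?; field; apply/andP; split => //.
  have hb0 : prob b (in_parts U) = 0 by apply/eqP; rewrite eq_le hpbU pbU0.
  have hU := ht pU; rewrite hb0 mulr0 in hU.
  have : prob mu (in_parts U) <= 0.
    by apply: le_trans hU; apply: ler_sum => x _; apply: hle.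
  move=> hmu; rewrite hb0 mul0r mulr0 pmulr_lle0 // invr_gt0 //.
- done.
Qed.

Lemma decomp (k0 : nat) : forall mu : {ffun perm -> R},
  (#|[set x | mu x != 0%R]| <= k0)%N -> (forall x, 0 <= mu x) -> (forall x, mu x <= t x) ->
  exists k (F : 'I_k -> {ffun perm -> R}) (a : 'I_k -> R) (nu : {ffun perm -> R}),
  [/\ forall i, is_dist (F i) /\ pd_non_beta_uniform Sb (2 * m / dl) e (F i),
      forall i, 0 <= a i, forall x, 0 <= nu x, \sum_x nu x <= c &
      forall x, mu x = \sum_i a i * F i x + nu x].
Proof.
elim: k0 => [|k0 IH] mu hcard h0 hle.
  case: (leP (\sum_x mu x) c) => hsum.
    exists 0%N, (fun _ => mu), (fun _ => 0), mu; split => //; try by case.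
    by move=> x; rewrite big_ord0 add0r.
  have [S [_ _ ha]] := step h0 hle hsum.
  have [x /andP[_ hx]] := sum_gt0_ex ha.
  have : (0 < #|[set x | mu x != 0%R]|)%N by apply/card_gt0P; exists x; rewrite inE.
  by rewrite leqn0 in hcard; rewrite (eqP hcard).
case: (leP (\sum_x mu x) c) => hsum.
  exists 0%N, (fun _ => mu), (fun _ => 0), mu; split => //; try by case.
  by move=> x; rewrite big_ord0 add0r.
have [S [hd hpd ha]] := step h0 hle hsum.
set mu' := [ffun x => if in_parts S x then 0 else mu x].
have h0' : forall x, 0 <= mu' x by move=> x; rewrite ffunE; case: ifP.
have hle' : forall x, mu' x <= t x.
  move=> x; rewrite ffunE; case: ifP => // _; apply: le_trans (h0 x) (hle x).
have hcard' : (#|[set x | mu' x != 0%R]| <= k0)%N.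
  rewrite -ltnS; apply: leq_trans hcard; apply: proper_card; apply/properP; split.
    by apply/subsetP => x; rewrite !inE ffunE; case: ifP => //; rewrite eqxx.
  have [x /andP[hS hx]] := sum_gt0_ex ha.
  by exists x; rewrite !inE ?ffunE ?hS ?eqxx.
have [k [F [a [nu [hF ha' hnu hsnu heq]]]]] := IH mu' hcard' h0' hle'.
exists k.+1, (fun i => if unlift ord0 i is Some j then F j else cond mu (in_parts S)),
  (fun i => if unlift ord0 i is Some j then a j else prob mu (in_parts S)), nu.
split => //.
- by move=> i; case: (unlift ord0 i) => [j|] //; split.
- by move=> i; case: (unlift ord0 i) => [j|] //; apply: ltW.
move=> x; rewrite big_ord_recl unlift_none.
under eq_bigr do rewrite liftK.
rewrite -addrA -heq /cond !ffunE; case: ifP => _.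
  by rewrite addr0 mulrC divfK // gt_eqF.
by rewrite mulr0 add0r.
Qed.
End Main.

Unset Implicit Arguments.
Theorem mainTheorem10 (R : realType) (n : nat)
    (Sb : {set 'I_(2 ^ n) * 'I_(2 ^ n)}) (t : {ffun {perm 'I_(2 ^ n)} -> R})
    (delta' delta m : R) (T : eqType) (h : {perm 'I_(2 ^ n)} -> T) (r : T) :
  is_part Sb -> is_dist t -> non_beta_uniform Sb delta' t ->
  0 < delta ->
  2 `^ (- m) <= prob t (fun s => h s == r) ->
  let s := cond t (fun s => h s == r) in
  exists (k : nat) (F : 'I_k -> {ffun {perm 'I_(2 ^ n)} -> R})
         (F' : {ffun {perm 'I_(2 ^ n)} -> R}) (alpha : 'I_k -> R) (gamma' : R),
    [/\ (forall i, is_dist (F i) /\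
          pd_non_beta_uniform Sb (2 * m / delta) (delta + delta') (F i)),
        is_dist F',
        ((forall i, 0 <= alpha i) /\ 0 <= gamma'),
        (\sum_i alpha i) + gamma' = 1 /\ gamma' <= 2 `^ (- m) &
        (forall sg, s sg = (\sum_i alpha i * F i sg) + gamma' * F' sg)].
Proof.
move=> hSb [ht0 ht1] ht hdl hP s.
set P := prob t _ in hP.
have P0 : 0 < P by apply: lt_le_trans hP; apply: powR_gt0.
set mu0 := [ffun x => if h x == r then t x else 0].
have h0 : forall x, 0 <= mu0 x by move=> x; rewrite ffunE; case: ifP.
have hle : forall x, mu0 x <= t x by move=> x; rewrite ffunE; case: ifP.
have hc : 2 `^ (- (2 * m)) <= 2 `^ (- m) * P.
  rewrite (_ : - (2 * m) = - m + - m); last by rewrite mulr2n; ring.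
  by rewrite two_powD; apply: ler_wpM2l => //; apply: powR_ge0.
have [k [F [a [nu [hF ha hnu hsnu heq]]]]] :=
  decomp hSb ht hdl hc (leqnn _) h0 hle.
set V := \sum_x nu x in hsnu.
have V0 : 0 <= V by apply: sumr_ge0.
have hmass : \sum_x mu0 x = P.
  by rewrite /P /prob [RHS]big_mkcond /=; apply: eq_bigr => x _; rewrite ffunE.
have hsum : \sum_i a i + V = P.
  rewrite -hmass; under [RHS]eq_bigr do rewrite heq.
  rewrite big_split /= exchange_big /=; congr (_ + _).
  apply: eq_bigr => i _; rewrite -mulr_sumr.
  by have [[_ ->] _] := hF i; rewrite mulr1.
have hs : forall sg, s sg = mu0 sg / P.
  by move=> sg; rewrite /s /cond !ffunE; case: ifP => //; rewrite mul0r.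
exists k, F, (if V == 0 then unif R _ else [ffun x => nu x / V]),
  (fun i => a i / P), (V / P); split => //.
- case: eqP => hV; first exact: unif_dist.
  split=> [x|]; first by rewrite ffunE divr_ge0.
  under eq_bigr do rewrite ffunE.
  by rewrite -mulr_suml mulfV //; apply/eqP.
- by split => [i|]; rewrite divr_ge0 // ltW.
- split; first by rewrite -mulr_suml -mulrDl hsum mulfV // gt_eqF.
  by rewrite ler_pdivrMr.
move=> sg; rewrite hs heq mulrDl mulr_suml; congr (_ + _).
  by apply: eq_bigr => i _; rewrite mulrAC.
case: eqP => hV.
  have Hnu : nu sg = 0 by apply: (psumr_eq0P _ hV) => // x _; exact: hnu x.
  by rewrite Hnu mul0r hV mul0r mul0r.
rewrite ffunE; field; apply/andP; split; [apply/eqP=> //|by rewrite gt_eqF].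
Qed.
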